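(* Let $G$ be a finitely generated virtually nilpotent group, $A\le\operatorname{Aut}(G)$ with $|A|=n$, and let $X=(G,A)$ be the $n$-valued coset group. Then for every $z\in X$ and every $y\in X$ the growth function $\xi_y(r)$ of the $n$-valued dynamic $T_z$ at $y$ has polynomial growth, i.e. there are $C,k>0$ with $\xi_y(r)\le Cr^k$ for all $r\ge1$.
   Context: An $n$-valued group is a set $X$ with an associative $n$-valued multiplication $*:X\times X\to\operatorname{Sym}^nX$ (values are $n$-multi-sets), with unit and inverse, as in Buchstaber's definition; multiplication is extended to multi-sets elementwise with multiplicities. Coset group: for a group $G$ and finite $A\le\operatorname{Aut}(G)$ with $|A|=n$, $X=G/A$ is the set of $A$-orbits with projection $\pi$, and $\pi(g)*\pi(h)=[\pi(g\,a(h)):a\in A]$, unit $\pi(e_G)$, $\operatorname{inv}(\pi(g))=\pi(g^{-1})$. For $z\in X$ the $n$-valued dynamic $T_z$ is $T_z(y)=y*z$, iterated by $T_z^k(y)=T_z^{k-1}(y)*z$. For a multi-set $M$, $\operatorname{Set}(M)$ is the set of distinct elements of $M$. The growth function of $T_z$ at $y$ is $\xi_y(r)=|\operatorname{Set}(T_z^r(y))|$. A group is virtually nilpotent if it has a nilpotent subgroup of finite index. *)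

(* Defs.v *)
From Stdlib Require Import Reals List ClassicalEpsilon.
Import ListNotations.
Set Implicit Arguments.

Record Grp := {
  car :> Type;
  gmul : car -> car -> car;
  ginv : car -> car;
  gone : car;
  gmulA : forall x y z, gmul x (gmul y z) = gmul (gmul x y) z;
  gmul1 : forall x, gmul gone x = x;
  gmulV : forall x, gmul (ginv x) x = gone
}.

Section GroupDefs.
Variable G : Grp.
Local Notation "x * y" := (gmul G x y).
Local Notation e := (gone G).

Inductive gen (P : G -> Prop) : G -> Prop :=
| gen_in : forall x, P x -> gen P x
| gen_one : gen P e
| gen_mul : forall x y, gen P x -> gen P y -> gen P (x * y)
| gen_inv : forall x, gen P x -> gen P (ginv G x).

Definition finitely_generated : Prop :=
  exists S : list G, forall g, gen (fun x => In x S) g.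

Definition is_subgroup (H : G -> Prop) : Prop :=
  H e /\ (forall x y, H x -> H y -> H (x * y)) /\ (forall x, H x -> H (ginv G x)).

Definition finite_index (H : G -> Prop) : Prop :=
  exists R : list G, forall g, exists r h, In r R /\ H h /\ g = r * h.

Definition comm (x y : G) : G := ginv G x * ginv G y * x * y.

Fixpoint lcs (H : G -> Prop) (i : nat) : G -> Prop :=
  match i with
  | O => H
  | S j => gen (fun c => exists x y, H x /\ lcs H j y /\ c = comm x y)
  end.

Definition nilpotent_subgroup (H : G -> Prop) : Prop :=
  exists c, forall g, lcs H c g -> g = e.

Definition virtually_nilpotent : Prop :=
  exists H, is_subgroup H /\ finite_index H /\ nilpotent_subgroup H.

Definition is_aut (f : G -> G) : Prop :=
  (forall x y, f (x * y) = f x * f y) /\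
  exists g : G -> G, (forall x, g (f x) = x) /\ (forall x, f (g x) = x).

Definition finite_aut_subgroup (A : list (G -> G)) : Prop :=
  NoDup A /\ (forall a, In a A -> is_aut a) /\ In (fun x => x) A /\
  (forall a b, In a A -> In b A -> In (fun x => a (b x)) A) /\
  (forall a, In a A -> exists b, In b A /\ forall x, b (a x) = x).

Variable A : list (G -> G).

(* elements of X = G/A are A-orbits, seen as predicates on G *)
Definition orbit (g : G) : G -> Prop := fun x => exists a, In a A /\ x = a g.
Definition is_X (S : G -> Prop) : Prop := exists g, S = orbit g.

Definition rep (S : G -> Prop) : G :=
  epsilon (inhabits e) (fun g => S = orbit g).

(* n-valued multiplication: pi(g) * pi(h) = [pi(g a(h)) : a in A] *)
Definition xmul (S T : G -> Prop) : list (G -> Prop) :=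
  map (fun a => orbit (rep S * a (rep T))) A.

Definition mmul (M : list (G -> Prop)) (z : G -> Prop) : list (G -> Prop) :=
  flat_map (fun w => xmul w z) M.

Fixpoint Tpow (z : G -> Prop) (k : nat) (y : G -> Prop) : list (G -> Prop) :=
  match k with
  | O => [y]
  | S j => mmul (Tpow z j y) z
  end.
End GroupDefs.

Definition setcard {T : Type} (M : list T) (m : nat) : Prop :=
  exists L, NoDup L /\ (forall x, In x L <-> In x M) /\ length L = m.

(* Main.v *)
Require Import Defs.
From Stdlib Require Import Reals List Lia Lra Psatz Arith ClassicalEpsilon.
Import ListNotations.

Section Alg.
Variable G : Grp.
Declare Scope grp_scope.
Local Notation "x * y" := (gmul G x y) : grp_scope.
Local Open Scope grp_scope.
Local Notation e := (gone G).
Local Notation inv := (ginv G).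

Lemma mA x y z : x * (y * z) = x * y * z. Proof. apply gmulA. Qed.
Lemma m1 x : e * x = x. Proof. apply gmul1. Qed.
Lemma mV x : inv x * x = e. Proof. apply gmulV. Qed.
Lemma canc a x y : a * x = a * y -> x = y.
Proof. intro H. rewrite <- (m1 x), <- (m1 y), <- (mV a), <- !mA, H. reflexivity. Qed.
Lemma mxV x : x * inv x = e.
Proof.
  set (y := x * inv x).
  assert (Hy : y * y = y).
  { unfold y. rewrite <- mA, (mA (inv x)), mV, m1. reflexivity. }
  assert (H : inv y * (y*y) = inv y * y) by (rewrite Hy; reflexivity).
  rewrite mA, mV, m1 in H. exact H.
Qed.
Lemma m1r x : x * e = x.
Proof. rewrite <- (mV x), mA, mxV, m1. reflexivity. Qed.
Lemma inv_uniq a b : a * b = e -> inv a = b.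
Proof. intro H. rewrite <- (m1r (inv a)), <- H, mA, mV, m1. reflexivity. Qed.
Lemma inv_mul x y : inv (x*y) = inv y * inv x.
Proof. apply inv_uniq. rewrite <- mA, (mA y), mxV, m1, mxV. reflexivity. Qed.
Lemma inv_inv x : inv (inv x) = x.
Proof. apply inv_uniq. apply mV. Qed.
Lemma inv_one : inv e = e.
Proof. apply inv_uniq. apply m1. Qed.
Lemma comm_inv x y : inv (comm G x y) = comm G y x.
Proof. apply inv_uniq. unfold comm. rewrite <- !mA.
  rewrite (mA y (inv y)), mxV, m1, (mA x (inv x)), mxV, m1, (mA (inv y) y), mV, m1, mV. reflexivity. Qed.
Lemma conj_comm g t : g * comm G g t = inv t * g * t.
Proof. unfold comm. rewrite <- !mA, (mA g (inv g)), mxV, m1, !mA. reflexivity. Qed.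

Lemma gen_mono (P Q : G -> Prop) : (forall x, P x -> Q x) -> forall x, gen G P x -> gen G Q x.
Proof. intros HPQ x Hx. induction Hx; [apply gen_in; auto|apply gen_one|apply gen_mul; auto|apply gen_inv; auto]. Qed.
Lemma gen_sub (P H : G -> Prop) : is_subgroup G H -> (forall x, P x -> H x) -> forall x, gen G P x -> H x.
Proof. intros [H1 [HM HI]] HP x Hx. induction Hx; auto. Qed.
Lemma gen_subgroup P : is_subgroup G (gen G P).
Proof. split; [apply gen_one|split; [apply gen_mul|apply gen_inv]]. Qed.

Lemma lcs_comm (H : G -> Prop) k g t : lcs G H k g -> H t -> lcs G H (S k) (comm G g t).
Proof. intros Hg Ht. simpl. rewrite <- comm_inv. apply gen_inv. apply gen_in. exists t, g. auto. Qed.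

Lemma lcs1_sub H : is_subgroup G H -> forall x, lcs G H 1 x -> H x.
Proof. intros HS. simpl. apply gen_sub; auto. intros c (x & y & Hx & Hy & ->).
  destruct HS as [H1 [HM HI]]. unfold comm. auto. Qed.

Lemma lcs_sub1 H : is_subgroup G H -> forall j x, lcs G H (S j) x -> lcs G H 1 x.
Proof. intros HS j. induction j; intros x Hx; auto.
  simpl in Hx |- *. revert Hx. apply gen_sub. apply gen_subgroup.
  intros c (a & b & Ha & Hb & ->). apply gen_in. exists a, b. split; auto. split; auto.
  apply lcs1_sub; auto. Qed.

Lemma lcs_derived H : is_subgroup G H -> forall j x, lcs G (lcs G H 1) j x -> lcs G H (S j) x.
Proof. intros HS j. induction j; intros x Hx; auto.
  simpl in Hx. change (lcs G H (S (S j)) x). simpl. revert Hx. apply gen_mono.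
  intros c (a & b & Ha & Hb & ->). exists a, b. split. apply lcs1_sub; auto. split; auto. apply IHj; auto. Qed.


Definition gprod (w : list G) : G := fold_right (gmul G) e w.
Lemma gprod_app a b : gprod (a ++ b) = gprod a * gprod b.
Proof. induction a; simpl. rewrite m1; auto. rewrite IHa, mA; auto. Qed.

Fixpoint gpow (t : G) (a : nat) : G := match a with 0 => e | S a => t * gpow t a end.

Definition letter := (nat * G)%type.
Definition prodL (v : list letter) := gprod (map snd v).
Lemma prodL_app a b : prodL (a ++ b) = prodL a * prodL b.
Proof. unfold prodL. rewrite map_app. apply gprod_app. Qed.

Definition conj1 (K : nat) (t : G) (x : letter) : list letter :=
  if S (fst x) <? K then [x; (S (fst x), comm G (snd x) t)] else [x].
Definition conjw K t (v : list letter) := flat_map (conj1 K t) v.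
Fixpoint conjn K t a v := match a with 0 => v | S a => conjn K t a (conjw K t v) end.

Definition dec (P : Prop) : {P} + {~P} := excluded_middle_informative P.

Fixpoint ext K t (w : list letter) : nat * list letter :=
  match w with
  | [] => (0, [])
  | u :: w => let (a, w') := ext K t w in
     if dec (fst u = 0 /\ snd u = t) then (S a, w') else (a, conjn K t a [u] ++ w')
  end.

Fixpoint extall K (ts : list G) (w : list letter) : list nat * list letter :=
  match ts with
  | [] => ([], w)
  | t :: ts => let (a, w1) := ext K t w in let (as_, v) := extall K ts w1 in (a :: as_, v)
  end.

Fixpoint prodpow (ts : list G) (as_ : list nat) : G :=
  match ts, as_ with t :: ts, a :: as_ => gpow t a * prodpow ts as_ | _, _ => e end.

Fixpoint Dp (K r k : nat) : nat :=
  match r with 0 => 1 | S r => Dp K r k + (if S k <? K then Dp K r (S k) else 0) end.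
Definition Phi K r (v : list letter) := fold_right (fun x acc => Dp K r (fst x) + acc) 0 v.
Fixpoint n0 (v : list letter) : nat := match v with [] => 0 | x :: v => (if fst x =? 0 then 1 else 0) + n0 v end.
Lemma n0_app a b : n0 (a ++ b) = n0 a + n0 b.
Proof. induction a; simpl; auto. rewrite IHa; lia. Qed.
Fixpoint sumn (l : list nat) := match l with [] => 0 | a :: l => a + sumn l end.

Fixpoint Ulev (T : list G) (k : nat) : list G :=
  match k with 0 => T | S k => flat_map (fun g => map (fun t => comm G g t) T) (Ulev T k) end.

Lemma Phi_app K r a b : Phi K r (a ++ b) = Phi K r a + Phi K r b.
Proof. induction a; simpl; auto. unfold Phi in *. simpl. rewrite IHa. lia. Qed.
Lemma Phi_conjw K t r v : Phi K r (conjw K t v) = Phi K (S r) v.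
Proof. induction v as [|x v IH]; simpl; auto. unfold conjw in *. simpl. rewrite Phi_app, IH.
  unfold conj1. destruct (S (fst x) <? K) eqn:E; unfold Phi; simpl; rewrite ?E; lia. Qed.
Lemma Phi_conjn K t a r v : Phi K r (conjn K t a v) = Phi K (r + a) v.
Proof. revert r v; induction a; intros r v; simpl. rewrite Nat.add_0_r; auto.
  rewrite IHa, Phi_conjw. f_equal. lia. Qed.
Lemma Dp_mono K r r' k : r <= r' -> Dp K r k <= Dp K r' k.
Proof. induction 1; auto. simpl. lia. Qed.
Lemma Phi_mono K r r' v : r <= r' -> Phi K r v <= Phi K r' v.
Proof. intro Hr. induction v; unfold Phi in *; simpl; auto. pose proof (Dp_mono K _ _ (fst a) Hr). lia. Qed.
Lemma Dp_ge1 K r k : 1 <= Dp K r k.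
Proof. induction r; simpl; lia. Qed.
Lemma Phi0_len K v : Phi K 0 v = length v.
Proof. induction v; unfold Phi in *; simpl; auto. Qed.
Lemma Dp_bound K r k : Dp K r k <= (S r) ^ (K - k).
Proof. revert k. induction r; intro k; simpl Dp.
  - rewrite Nat.pow_1_l. lia.
  - destruct (S k <? K) eqn:E.
    + apply Nat.ltb_lt in E. replace (K - k) with (S (K - S k)) by lia.
      pose proof (IHr k) as H1. replace (K - k) with (S (K - S k)) in H1 by lia.
      pose proof (IHr (S k)) as H2.
      assert (S r ^ (K - S k) <= S (S r) ^ (K - S k)) by (apply Nat.pow_le_mono_l; lia).
      simpl in *. nia.
    + rewrite Nat.add_0_r. etransitivity. apply IHr. apply Nat.pow_le_mono_l. lia.
Qed.

Section Ext.
Variables (H : G -> Prop) (K : nat) (T : list G).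
Hypothesis HT : forall t, In t T -> H t.
Hypothesis HK : forall g, lcs G H K g -> g = e.

Lemma Ulev_lcs k g : In g (Ulev T k) -> lcs G H k g.
Proof. revert g; induction k; intros g Hg; simpl in *; auto.
  apply in_flat_map in Hg as (g' & Hg' & Hin). apply in_map_iff in Hin as (t & <- & Ht).
  apply lcs_comm; auto. Qed.

Definition Inv (v : list letter) := forall x, In x v -> fst x < K /\ In (snd x) (Ulev T (fst x)).

Variable t : G.
Hypothesis Ht : In t T.

Lemma conj1_prod x : Inv [x] -> prodL (conj1 K t x) = inv t * snd x * t.
Proof. intro HI. destruct (HI x (or_introl eq_refl)) as [Hk Hu].
  unfold conj1, prodL. destruct (S (fst x) <? K) eqn:E; simpl.
  - rewrite m1r, conj_comm. auto.
  - apply Nat.ltb_ge in E. assert (S (fst x) = K) by lia.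
    assert (Hc : comm G (snd x) t = e). { apply HK. rewrite <- H0. apply lcs_comm; auto. apply Ulev_lcs; auto. }
    rewrite <- conj_comm, Hc, !m1r. auto.
Qed.

Lemma conjw_prod v : Inv v -> prodL (conjw K t v) = inv t * prodL v * t.
Proof. induction v as [|x v IH]; intro HI.
  - unfold prodL; simpl. rewrite m1r, mV. auto.
  - unfold conjw. simpl. rewrite prodL_app. fold (conjw K t v).
    replace (prodL (x :: v)) with (snd x * prodL v) by reflexivity.
    rewrite IH, conj1_prod.
    rewrite <- !mA. f_equal. f_equal. rewrite !mA, mxV, m1. auto.
    intros y Hy; apply HI; destruct Hy as [<-|[]]; left; auto.
    intros y Hy; apply HI; right; auto.
Qed.

Lemma conjw_inv v : Inv v -> Inv (conjw K t v).
Proof. intros HI y Hy. unfold conjw in Hy. apply in_flat_map in Hy as (x & Hx & Hy).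
  destruct (HI x Hx) as [Hk Hu]. unfold conj1 in Hy. destruct (S (fst x) <? K) eqn:E.
  - apply Nat.ltb_lt in E. destruct Hy as [<-|[<-|[]]]; auto. simpl. split; auto.
    apply in_flat_map. exists (snd x). split; auto. apply in_map. auto.
  - destruct Hy as [<-|[]]; auto.
Qed.

Lemma conjn_prod a v : Inv v -> prodL (conjn K t a v) = inv (gpow t a) * prodL v * gpow t a.
Proof. revert v; induction a; intros v HI; simpl.
  - rewrite inv_one, m1, m1r. auto.
  - rewrite IHa by (apply conjw_inv; auto). rewrite conjw_prod by auto.
    rewrite inv_mul, !mA. auto.
Qed.
Lemma conjn_inv a v : Inv v -> Inv (conjn K t a v).
Proof. revert v; induction a; intros v HI; simpl; auto. apply IHa, conjw_inv; auto. Qed.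

Lemma n0_conjw v : n0 (conjw K t v) = n0 v.
Proof. induction v as [|x v IH]; auto. unfold conjw in *; simpl. rewrite n0_app, IH.
  unfold conj1. destruct (S (fst x) <? K); simpl; destruct (fst x =? 0); simpl; auto. Qed.
Lemma n0_conjn a v : n0 (conjn K t a v) = n0 v.
Proof. revert v; induction a; intros; simpl; auto. rewrite IHa, n0_conjw. auto. Qed.
Lemma zero_conjw v x : In x (conjw K t v) -> fst x = 0 -> In x v.
Proof. unfold conjw. intros Hx H0. apply in_flat_map in Hx as (y & Hy & Hx).
  unfold conj1 in Hx. destruct (S (fst y) <? K).
  - destruct Hx as [<-|[<-|[]]]; auto; discriminate.
  - destruct Hx as [<-|[]]; auto. Qed.
Lemma zero_conjn a v x : In x (conjn K t a v) -> fst x = 0 -> In x v.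
Proof. revert v; induction a; intros v Hx H0; simpl in *; auto. apply zero_conjw; auto. Qed.

Lemma ext_spec w a w' : Inv w -> ext K t w = (a, w') ->
  prodL w = gpow t a * prodL w' /\ Inv w' /\ (forall r, Phi K r w' <= Phi K (r + a) w) /\
  a + n0 w' <= n0 w /\ (forall x, In x w' -> fst x = 0 -> In x w /\ snd x <> t).
Proof.
  revert a w'; induction w as [|u w IH]; intros a w' HI He.
  - simpl in He. inversion He; subst. unfold prodL; simpl. rewrite m1. repeat split; auto.
    all: try (intros ? []); try (intros; simpl; lia); try contradiction.
  - simpl in He. destruct (ext K t w) as [a0 w0] eqn:E.
    assert (HIw : Inv w) by (intros y Hy; apply HI; right; auto).
    destruct (IH a0 w0 HIw eq_refl) as (P1 & P2 & P3 & P4 & P5).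
    assert (HIu : Inv [u]) by (intros y [<-|[]]; apply HI; left; auto).
    destruct (dec (fst u = 0 /\ snd u = t)) as [[Hu1 Hu2]|Hu]; inversion He; subst.
    + unfold prodL; simpl. fold (prodL w). rewrite P1, mA. split; [auto|split; [auto|split; [|split]]].
      * intro r. pose proof (P3 r).
        pose proof (Phi_mono K (r + a0) (r + S a0) w ltac:(lia)). lia.
      * simpl. rewrite Hu1. simpl. lia.
      * intros x Hx Hx0. destruct (P5 x Hx Hx0). split; [right; auto | auto].
    + unfold prodL at 1; simpl. fold (prodL w). rewrite prodL_app, conjn_prod, P1 by auto.
      unfold prodL at 2; simpl. rewrite m1r. rewrite !mA, mxV, m1. split; [auto|split; [|split; [|split]]].
      * intros y Hy. apply in_app_or in Hy as [Hy|Hy]. apply conjn_inv in Hy; auto. auto.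
      * intro r. rewrite Phi_app, Phi_conjn. specialize (P3 r). simpl. lia.
      * rewrite n0_app, n0_conjn.
        simpl. destruct (fst u =? 0); simpl; lia.
      * intros x Hx Hx0. apply in_app_or in Hx as [Hx|Hx].
        -- apply zero_conjn in Hx; auto. destruct Hx as [<-|[]]. split. left; auto. intro; apply Hu; auto.
        -- destruct (P5 x Hx Hx0). split; [right; auto | auto].
Qed.
End Ext.

Lemma extall_spec H K T (HT : forall t, In t T -> H t) (HK : forall g, lcs G H K g -> g = e) :
  forall ts w as_ v, (forall t, In t ts -> In t T) -> Inv K T w ->
  (forall x, In x w -> fst x = 0 -> In (snd x) ts) ->
  extall K ts w = (as_, v) ->
  prodL w = prodpow ts as_ * prodL v /\ Inv K T v /\ (forall r, Phi K r v <= Phi K (r + sumn as_) w) /\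
  sumn as_ + n0 v <= n0 w /\ (forall x, In x v -> fst x <> 0) /\ length as_ = length ts.
Proof.
  induction ts as [|t ts IH]; intros w as_ v Hts HI Hz He.
  - simpl in He. inversion He; subst. simpl. rewrite m1. split; [auto|]. split; [auto|].
    split; [intro r; rewrite Nat.add_0_r; auto|]. split; [lia|]. split; [|auto].
    intros x Hx Hx0. apply (Hz x Hx Hx0).
  - simpl in He. destruct (ext K t w) as [a w1] eqn:E1. destruct (extall K ts w1) as [as1 v1] eqn:E2.
    inversion He; subst.
    destruct (ext_spec H K T HT HK t (Hts t (or_introl eq_refl)) w a w1 HI E1) as (P1 & P2 & P3 & P4 & P5).
    destruct (IH w1 as1 v (fun t0 h => Hts t0 (or_intror h)) P2) as (Q1 & Q2 & Q3 & Q4 & Q5 & Q6).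
    { intros x Hx Hx0. destruct (P5 x Hx Hx0) as [Hxw Hne]. destruct (Hz x Hxw Hx0) as [->|]; auto. contradiction. }
    { auto. }
    simpl. rewrite P1, Q1, mA. split; auto. split; auto. split.
    + intro r. eapply Nat.le_trans. apply Q3. replace (r + (a + sumn as1)) with (r + sumn as1 + a) by lia. apply P3.
    + split. lia. split; auto.
Qed.

Fixpoint vecs (m d : nat) : list (list nat) :=
  match d with 0 => [[]] | S d => flat_map (fun i => map (cons i) (vecs m d)) (seq 0 (S m)) end.
Lemma len_fm_const {X Y : Type} (f : X -> list Y) c l : (forall x, length (f x) = c) -> length (flat_map f l) = (length l * c)%nat.
Proof. intro Hf. induction l; simpl; auto. rewrite length_app, Hf, IHl. auto. Qed.
Lemma vecs_len m d : length (vecs m d) = (S m)^d.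
Proof. induction d; [simpl; auto|]. cbn [vecs]. rewrite (len_fm_const _ (length (vecs m d))). rewrite length_seq, IHd. auto.
  intro; apply length_map. Qed.
Lemma vecs_in m as_ : (forall a, In a as_ -> a <= m) -> In as_ (vecs m (length as_)).
Proof. induction as_ as [|a as_ IH]; intro Hb; [simpl; auto|]. cbn [length vecs]. apply in_flat_map. exists a. split.
  apply in_seq. specialize (Hb a (or_introl eq_refl)). lia. apply in_map. apply IH. intros; apply Hb; right; auto. Qed.
Lemma sumn_le a as_ : In a as_ -> a <= sumn as_.
Proof. induction as_; simpl; intros []; subst; try lia. specialize (IHas_ H). lia. Qed.
Lemma n0_le v : n0 v <= length v.
Proof. induction v; simpl; auto. destruct (fst a =? 0); lia. Qed.
Lemma Phi_w0 K r w : Phi K r (map (fun g => (0,g)) w) = (length w * Dp K r 0)%nat.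
Proof. induction w; [simpl; auto|]. unfold Phi in *. simpl. rewrite IHw. lia. Qed.

Definition Cover (T : list G) := exists Kc Dd : nat, forall m, exists Dl : list G,
  length Dl <= (Kc * (S m)^Dd)%nat /\
  forall w, (forall x, In x w -> In x T) -> length w <= m -> In (gprod w) Dl.

Theorem nil_cover K : forall H, is_subgroup G H -> (forall g, lcs G H K g -> g = e) ->
  forall T, (forall t, In t T -> H t) -> Cover T.
Proof.
  induction K as [|K IH]; intros H HS HK T HT.
  - exists 1, 0. intro m. exists [e]. split. simpl; lia.
    intros w Hw _. left. induction w as [|a w IHw]; simpl; auto.
    rewrite (HK a (HT a (Hw a (or_introl eq_refl)))). rewrite m1. apply IHw. intros; apply Hw; right; auto.
  - set (Ufin := flat_map (Ulev T) (seq 1 K)).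
    destruct (IH (lcs G H 1) (gen_subgroup _) (fun g Hg => HK g (lcs_derived H HS K g Hg)) Ufin) as (Kc & Dd & HC).
    { intros u Hu. unfold Ufin in Hu. apply in_flat_map in Hu as (k & Hk & Hu). apply in_seq in Hk.
      destruct k as [|j]; [lia|]. apply (lcs_sub1 H HS j). eapply Ulev_lcs; eauto. }
    exists Kc, (length T + S (S K) * Dd)%nat. intro m.
    destruct (HC (m * (S m)^(S K))%nat) as (Dl' & HL & HD).
    exists (flat_map (fun as_ => map (fun x => prodpow T as_ * x) Dl') (vecs m (length T))). split.
    + rewrite (len_fm_const _ (length Dl')) by (intro; apply length_map). rewrite vecs_len.
      assert (HP : (S (m * S m ^ S K) <= S m ^ S (S K))%nat).
      { rewrite (Nat.pow_succ_r' _ (S K)). pose proof (Nat.pow_le_mono_l 1 (S m) (S K) ltac:(lia)).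
        rewrite Nat.pow_1_l in H0. nia. }
      apply (Nat.pow_le_mono_l _ _ Dd) in HP. rewrite <- Nat.pow_mul_r in HP.
      rewrite Nat.pow_add_r.
      eapply Nat.le_trans. apply Nat.mul_le_mono_l. apply HL.
      eapply Nat.le_trans. apply Nat.mul_le_mono_l. apply Nat.mul_le_mono_l. apply HP. nia.
    + intros w Hw Hlen. set (w0 := map (fun g => (0, g)) w).
      destruct (extall (S K) T w0) as [as_ v] eqn:E.
      destruct (extall_spec H (S K) T HT HK T w0 as_ v (fun t h => h)) as (Q1 & Q2 & Q3 & Q4 & Q5 & Q6).
      { intros x Hx. unfold w0 in Hx. apply in_map_iff in Hx as (g & <- & Hg). simpl. split. lia. apply Hw; auto. }
      { intros x Hx _. unfold w0 in Hx. apply in_map_iff in Hx as (g & <- & Hg). simpl. apply Hw; auto. }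
      { exact E. }
      assert (Hw0 : prodL w0 = gprod w). { unfold prodL, w0. rewrite map_map. simpl. rewrite map_id. auto. }
      assert (Hsum : sumn as_ <= m).
      { pose proof (n0_le w0). unfold w0 in H0 at 2. rewrite length_map in H0. lia. }
      rewrite <- Hw0, Q1. apply in_flat_map. exists as_. split.
      * rewrite <- Q6. apply vecs_in. intros a Ha. pose proof (sumn_le a as_ Ha). lia.
      * apply in_map. apply HD.
        -- intros y Hy. apply in_map_iff in Hy as (x & <- & Hx). destruct (Q2 x Hx) as [Hk Hu].
           unfold Ufin. apply in_flat_map. exists (fst x). split; auto. apply in_seq. specialize (Q5 x Hx). lia.
        -- rewrite length_map. rewrite <- (Phi0_len (S K)). eapply Nat.le_trans. apply Q3. simpl.
           eapply Nat.le_trans. apply (Phi_mono _ _ m). auto. unfold w0. rewrite Phi_w0.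
           apply Nat.mul_le_mono. auto. pose proof (Dp_bound (S K) m 0). rewrite Nat.sub_0_r in H0. auto.
Qed.

Lemma exists_list {X : Type} (l : list X) (Q : X -> G -> Prop) :
  (forall x, In x l -> exists h, Q x h) ->
  exists T : list G, (forall h, In h T -> exists x, In x l /\ Q x h) /\ forall x, In x l -> exists h, In h T /\ Q x h.
Proof.
  induction l as [|x l IH]; intro Hl.
  - exists []. split; intros ? [].
  - destruct IH as (T & H1 & H2). intros; apply Hl; right; auto.
    destruct (Hl x (or_introl eq_refl)) as (h & Hh).
    exists (h :: T). split.
    + intros h' [<-|Hh']. exists x; split; auto. left; auto. destruct (H1 h' Hh') as (x' & ? & ?). exists x'; split; auto. right; auto.
    + intros x' [<-|Hx']. exists h; split; auto. left; auto. destruct (H2 x' Hx') as (h' & ? & ?). exists h'; split; auto. right; auto.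
Qed.

Lemma virt_cover : virtually_nilpotent G -> forall Sl : list G, Cover Sl.
Proof.
  intros (H & HS & (R & HR) & (K & HK)) Sl.
  destruct (HR e) as (r0 & h0 & Hr0 & Hh0 & He0).
  destruct (exists_list (list_prod Sl R) (fun p h => H h /\ exists r', In r' R /\ fst p * snd p = r' * h)) as (T & HT1 & HT2).
  { intros [s r] _. destruct (HR (s*r)) as (r' & h & ? & ? & ?). exists h. split; auto. exists r'; auto. }
  set (T2 := h0 :: T).
  assert (Hword : forall w, (forall x, In x w -> In x Sl) -> forall r, In r R -> exists r' u, In r' R /\
     (forall x, In x u -> In x T2) /\ length u = length w /\ gprod w * r = r' * gprod u).
  { induction w as [|s w IHw]; intros Hw r Hr.
    - exists r, []. simpl. split; auto. split. intros _ []. split; auto. rewrite m1, m1r; auto.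
    - destruct (IHw (fun x h => Hw x (or_intror h)) r Hr) as (r1 & u & Hr1 & Hu & Hl & Heq).
      destruct (HT2 (s, r1) (in_prod Sl R s r1 (Hw s (or_introl eq_refl)) Hr1)) as (h & HhT & _ & r' & Hr' & Hsr).
      exists r', (h :: u). split; auto. split. intros x [<-|Hx]. right; auto. apply Hu; auto.
      split. simpl; auto. simpl. rewrite <- mA, Heq, mA. simpl in Hsr. rewrite Hsr, mA. auto. }
  assert (HT2H : forall t, In t T2 -> H t).
  { intros t [<-|Ht]; auto. destruct (HT1 t Ht) as (x & _ & ? & _); auto. }
  destruct (nil_cover K H HS HK T2 HT2H) as (Kc & Dd & HC).
  exists (length R * Kc * 2^Dd)%nat, Dd. intro m. destruct (HC (S m)) as (Dl & HL & HD).
  exists (flat_map (fun r => map (fun x => r * x) Dl) R). split.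
  - rewrite (len_fm_const _ (length Dl)) by (intro; apply length_map).
    assert (HP : (S (S m) ^ Dd <= 2 ^ Dd * S m ^ Dd)%nat).
    { rewrite <- Nat.pow_mul_l. apply Nat.pow_le_mono_l. lia. }
    eapply Nat.le_trans. apply Nat.mul_le_mono_l, HL. eapply Nat.le_trans.
    apply Nat.mul_le_mono_l, Nat.mul_le_mono_l, HP. rewrite !Nat.mul_assoc. apply Nat.le_refl.
  - intros w Hw Hlen. destruct (Hword w Hw r0 Hr0) as (r' & u & Hr' & Hu & Hl & Heq).
    apply in_flat_map. exists r'. split; auto. apply in_map_iff. exists (gprod (u ++ [h0])). split.
    + rewrite gprod_app. simpl. rewrite m1r, mA, <- Heq, <- mA, <- He0, m1r. auto.
    + apply HD. intros x Hx. apply in_app_or in Hx as [Hx|[<-|[]]]; auto. left; auto.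
      rewrite length_app. simpl. lia.
Qed.

Lemma aut_e (b : G -> G) : is_aut G b -> b e = e.
Proof. intros [Hb _]. apply (canc (b e)). rewrite <- Hb, m1, m1r. auto. Qed.
Lemma aut_prod b : is_aut G b -> forall w, b (gprod w) = gprod (map b w).
Proof. intros Hb w. induction w; simpl. apply aut_e; auto. destruct Hb as [Hm _]. rewrite Hm, IHw. auto. Qed.

Lemma rep_in A g : In (fun x => x) A -> exists b, In b A /\ rep G A (orbit G A g) = b g.
Proof. intro Hid. unfold rep.
  pose proof (epsilon_spec (inhabits e) (fun h => orbit G A g = orbit G A h) (ex_intro _ g eq_refl)) as Hs.
  simpl in Hs. set (r := epsilon _ _) in *.
  assert (Hr : orbit G A r r) by (exists (fun x => x); split; auto).
  rewrite <- Hs in Hr. destruct Hr as (b & Hb & Hr). exists b; auto. Qed.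

Lemma Tpow_form A (HA : finite_aut_subgroup G A) z0 y0 : forall k W,
  In W (Tpow G A (orbit G A z0) k (orbit G A y0)) ->
  exists c w, In c A /\ (forall x, In x w -> In x (map (fun a => a z0) A)) /\ length w = k /\
    W = orbit G A (c y0 * gprod w).
Proof.
  destruct HA as (_ & Haut & Hid & Hcl & _).
  induction k as [|k IH]; intros W HW.
  - simpl in HW. destruct HW as [<-|[]]. exists (fun x => x), []. split; auto. split. intros _ [].
    split; auto. simpl. rewrite m1r. auto.
  - simpl in HW. unfold mmul in HW. apply in_flat_map in HW as (W' & HW' & HW).
    unfold xmul in HW. apply in_map_iff in HW as (a & <- & Ha).
    destruct (IH W' HW') as (c & w & Hc & Hw & Hl & ->).
    destruct (rep_in A (c y0 * gprod w) Hid) as (b & Hb & ->).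
    destruct (rep_in A z0 Hid) as (b' & Hb' & ->).
    exists (fun x => b (c x)), (map b w ++ [a (b' z0)]). split; auto. split; [|split].
    + intros x Hx. apply in_app_or in Hx as [Hx|[<-|[]]].
      * apply in_map_iff in Hx as (x' & <- & Hx'). apply Hw, in_map_iff in Hx' as (a'' & <- & Ha'').
        apply in_map_iff. exists (fun x => b (a'' x)). split; auto.
      * apply in_map_iff. exists (fun x => a (b' x)). split; auto.
    + rewrite length_app, length_map. simpl. lia.
    + f_equal. destruct (Haut b Hb) as [Hm _]. rewrite Hm, aut_prod, gprod_app by auto. simpl.
      rewrite m1r, mA. auto.
Qed.

End Alg.

Open Scope R_scope.
Theorem mainTheorem3 (G : Grp) (A : list (G -> G)) :
  finitely_generated G -> virtually_nilpotent G ->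
  finite_aut_subgroup G A ->
  forall z y : G -> Prop, is_X G A z -> is_X G A y ->
  exists C k : R, 0 < C /\ 0 < k /\
    forall (r : nat) (m : nat), (1 <= r)%nat ->
      setcard (Tpow G A z r y) m -> INR m <= C * Rpower (INR r) k.
Proof.
  intros _ HVN HA z y [z0 ->] [y0 ->].
  destruct (virt_cover G HVN (map (fun a => a z0) A)) as (Kc & Dd & HC).
  set (N := (length A * Kc * 2 ^ Dd)%nat).
  exists (INR N + 1), (INR (S Dd)). split. pose proof (pos_INR N). lra. split. apply lt_0_INR. lia.
  intros r m Hr (L & HND & HLeq & HLlen).
  destruct (HC r) as (Dl & HDl & HDmem).
  assert (Hinc : incl L (flat_map (fun c => map (fun x => orbit G A (gmul G (c y0) x)) Dl) A)).
  { intros W HW. apply HLeq in HW. destruct (Tpow_form G A HA z0 y0 r W HW) as (c & w & Hc & Hw & Hl & ->).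
    apply in_flat_map. exists c. split; auto. apply in_map_iff. exists (gprod G w). split; auto.
    apply HDmem; auto. lia. }
  pose proof (NoDup_incl_length HND Hinc) as Hm.
  rewrite (len_fm_const _ (length Dl)) in Hm by (intro; apply length_map).
  assert (Hnat : (m <= N * r ^ S Dd)%nat).
  { assert (HP : (S r ^ Dd <= 2 ^ Dd * r ^ Dd)%nat).
    { rewrite <- Nat.pow_mul_l. apply Nat.pow_le_mono_l. lia. }
    assert (HQ : (r ^ Dd <= r ^ S Dd)%nat). { rewrite Nat.pow_succ_r'. nia. }
    rewrite <- HLlen. eapply Nat.le_trans. exact Hm. eapply Nat.le_trans. apply Nat.mul_le_mono_l, HDl.
    eapply Nat.le_trans. apply Nat.mul_le_mono_l, Nat.mul_le_mono_l, HP.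
    eapply Nat.le_trans. apply Nat.mul_le_mono_l, Nat.mul_le_mono_l, Nat.mul_le_mono_l, HQ.
    unfold N. rewrite !Nat.mul_assoc. apply Nat.le_refl. }
  apply le_INR in Hnat. rewrite mult_INR, pow_INR in Hnat.
  rewrite Rpower_pow by (apply lt_0_INR; lia).
  assert (0 <= INR r ^ S Dd) by (apply pow_le, pos_INR).
  nra.
Qed.
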